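(* Let $m=2k+1$ with $k$ a nonnegative integer and let $n$ be an integer with $0\le n<m-1$. Let $M(u)=M(u^2+u^{2m})$, $u\in(0,+\infty)$, where $M(h)$ is the first order Melnikov function of $(1.1)_\epsilon$. Then $M(u)$ is a linear combination of the following $\left[\frac{n-1}{2}\right]+\left[\frac{n}{2}\right]^2+3\left[\frac{n}{2}\right]+3$ linearly independent functions on $(0,+\infty)$: $$u^{2p+1}\ (0\le p\le [n/2]);\qquad u^{2p+(m-1)(k+1)+1}\ (0\le p\le [n/2],\ 0\le k\le 2p);\qquad (u^2+u^{2m})^{l+1}\ (0\le l\le [(n-1)/2]),$$ (i.e. $u,u^3,\dots,u^{2[n/2]+1},u^{m},u^{m+2},u^{2m+1},\dots,u^{2[n/2]m+m},u^2+u^{2m},\dots,(u^2+u^{2m})^{[(n-1)/2]+1}$), and the coefficients of this linear combination are independent, i.e. as the coefficients of $p^\pm,q^\pm$ range over all real values these coefficients take all real values.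
   Context: $[x]$ is the integer part. System $(1.1)_\epsilon$: $\dot x=y+\epsilon p^{+},\ \dot y=-x+\epsilon q^{+}$ for $y\ge x^{m}$, and $\dot x=y+\epsilon p^{-},\ \dot y=-x+\epsilon q^{-}$ for $y<x^{m}$, where $p^{\pm}=\sum_{i+j=0}^{n}a^{\pm}_{i,j}x^iy^j$, $q^{\pm}=\sum_{i+j=0}^{n}b^{\pm}_{i,j}x^iy^j$ are arbitrary real polynomials of degree $n$. For $h>0$, $u=u(h)>0$ solves $u^2+u^{2m}=h$; $L_h^{+}$ is the arc of $x^2+y^2=h$ in $\{y\ge x^m\}$ traversed clockwise from $(-u,(-u)^m)$ to $(u,u^m)$, and $L_h^-$ the arc in $\{y\le x^m\}$ traversed clockwise from $(u,u^m)$ to $(-u,(-u)^m)$. The first order Melnikov function is $M(h)=\int_{L_h^+}q^+dx-p^+dy+\int_{L_h^-}q^-dx-p^-dy$. *)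

(* Defs.v *)
From Stdlib Require Import Reals Lra Lia ZArith List ClassicalEpsilon.
From Coquelicot Require Import Coquelicot.
Open Scope R_scope.

Definition poly2 (n : nat) (a : nat -> nat -> R) (x y : R) : R :=
  sum_f_R0 (fun i => sum_f_R0 (fun j => a i j * x ^ i * y ^ j) (n - i)) n.

Definition line_integral (P Q : R -> R -> R) (g1 g2 : R -> R) (a b : R) : R :=
  RInt (fun t => P (g1 t) (g2 t) * Derive g1 t + Q (g1 t) (g2 t) * Derive g2 t) a b.

Definition u_of_h (m : nat) (h : R) : R :=
  epsilon (inhabits 0) (fun u => 0 < u /\ u ^ 2 + u ^ (2 * m) = h).

(* Clockwise parametrization of the circle x^2+y^2=h: theta |-> (sqrt h sin theta, sqrt h cos theta).
   The intersection point (u,u^m) has angle th0 = acos(u^m/sqrt h) in (0,pi);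
   (-u,(-u)^m) = (-u,-u^m) (m odd) has angle th0 - pi (equivalently th0 + pi). *)
Definition circ_x (h t : R) : R := sqrt h * sin t.
Definition circ_y (h t : R) : R := sqrt h * cos t.
Definition theta0 (m : nat) (h : R) : R := acos ((u_of_h m h) ^ m / sqrt h).

(* First order Melnikov function of (1.1)_eps:
   M(h) = int_{L_h^+} q^+ dx - p^+ dy + int_{L_h^-} q^- dx - p^- dy,
   with p^+ = poly2 n ap, q^+ = poly2 n bp, p^- = poly2 n am, q^- = poly2 n bm.
   L_h^+ : theta from th0 - pi to th0 (from (-u,-u^m) to (u,u^m), clockwise, through the top);
   L_h^- : theta from th0 to th0 + pi (from (u,u^m) to (-u,-u^m), clockwise). *)
Definition melnikov (m n : nat) (ap bp am bm : nat -> nat -> R) (h : R) : R :=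
  line_integral (poly2 n bp) (fun x y => - poly2 n ap x y)
    (circ_x h) (circ_y h) (theta0 m h - PI) (theta0 m h)
  + line_integral (poly2 n bm) (fun x y => - poly2 n am x y)
    (circ_x h) (circ_y h) (theta0 m h) (theta0 m h + PI).

Definition basis (m n : nat) : list (R -> R) :=
  map (fun p => fun u : R => u ^ (2 * p + 1)) (seq 0 (n / 2 + 1))
  ++ flat_map (fun p => map (fun kk => fun u : R => u ^ (2 * p + (m - 1) * (kk + 1) + 1))
                            (seq 0 (2 * p + 1)))
              (seq 0 (n / 2 + 1))
  (* l ranges over 0 <= l <= [(n-1)/2], i.e. floor((n+1)/2) values (none if n = 0) *)
  ++ map (fun l => fun u : R => (u ^ 2 + u ^ (2 * m)) ^ (l + 1)) (seq 0 ((n + 1) / 2)).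

Fixpoint lincomb (fs : list (R -> R)) (cs : list R) (u : R) : R :=
  match fs, cs with
  | cons f fs', cons c cs' => c * f u + lincomb fs' cs' u
  | _, _ => 0
  end.

Definition lin_indep_pos (fs : list (R -> R)) : Prop :=
  forall cs : list R, length cs = length fs ->
    (forall u, 0 < u -> lincomb fs cs u = 0) -> List.Forall (fun c => c = 0) cs.

(* Main.v *)
Require Import Defs.
From Stdlib Require Import Reals Lra Lia ZArith List ClassicalEpsilon.
From Coquelicot Require Import Coquelicot.
Open Scope R_scope.


Lemma RInt_plusR (f g : R -> R) a b : ex_RInt f a b -> ex_RInt g a b ->
  RInt (fun x => f x + g x) a b = RInt f a b + RInt g a b.
Proof. intros H1 H2. exact (RInt_plus f g a b H1 H2). Qed.

Lemma RInt_scalR (f : R -> R) a b c : ex_RInt f a b ->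
  RInt (fun x => c * f x) a b = c * RInt f a b.
Proof. intros H1. exact (RInt_scal f a b c H1). Qed.

Lemma FTC (f df : R -> R) lo hi : (forall x, is_derive f x (df x)) -> (forall x, continuous df x) ->
  RInt df lo hi = f hi - f lo.
Proof.
  intros H1 H2. apply is_RInt_unique. apply (is_RInt_derive f df lo hi); auto.
Qed.

Lemma exd_cont (f : R -> R) x : ex_derive f x -> continuous f x.
Proof. intros H. exact (@ex_derive_continuous R_AbsRing R_NormedModule f x H). Qed.

Lemma exRI (f : R -> R) a b : (forall z, continuous f z) -> ex_RInt f a b.
Proof. intros H. apply (@ex_RInt_continuous R_CompleteNormedModule). intros; apply H. Qed.

Lemma cont_sc a b x : continuous (fun t => sin t ^ a * cos t ^ b) x.
Proof. apply exd_cont. auto_derive. auto. Qed.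

Lemma ex_sc a b lo hi : ex_RInt (fun t => sin t ^ a * cos t ^ b) lo hi.
Proof. apply exRI. intros; apply cont_sc. Qed.

Definition J a b lo hi : R := RInt (fun t => sin t ^ a * cos t ^ b) lo hi.

Lemma L1 a b lo hi : J a b lo hi = J (a+2) b lo hi + J a (b+2) lo hi.
Proof.
  unfold J. rewrite <- RInt_plusR by apply ex_sc.
  apply RInt_ext. intros x _. rewrite !pow_add.
  pose proof (sin2_cos2 x) as H. unfold Rsqr in H. simpl. 
  transitivity (sin x ^ a * cos x ^ b * (sin x * sin x + cos x * cos x)). rewrite H; ring. ring.
Qed.

Lemma L2 a b lo hi : INR a * J (a-1) (b+1) lo hi - INR b * J (a+1) (b-1) lo hi
  = sin hi ^ a * cos hi ^ b - sin lo ^ a * cos lo ^ b.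
Proof.
  unfold J. 
  transitivity (RInt (fun t => INR a * (sin t ^ (a-1) * cos t ^ (b+1)) + (- INR b) * (sin t ^ (a+1) * cos t ^ (b-1))) lo hi).
  { rewrite RInt_plusR. rewrite !RInt_scalR by apply ex_sc. ring.
    apply exRI; intros; apply exd_cont; auto_derive; auto.
    apply exRI; intros; apply exd_cont; auto_derive; auto. }
  apply (FTC (fun t => sin t ^ a * cos t ^ b)).
  - intros x. auto_derive. auto.
    destruct a as [|a]; destruct b as [|b]; simpl; rewrite ?Nat.sub_0_r; rewrite ?S_INR; try ring;
    replace (a+1)%nat with (S a) by lia; replace (b+1)%nat with (S b) by lia; simpl; try ring.
  - intros x. apply exd_cont; auto_derive; auto.
Qed.

Lemma sum_zero (f : nat -> R) N : (forall i, (i <= N)%nat -> f i = 0) -> sum_f_R0 f N = 0.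
Proof. induction N; intros Hf; simpl. apply Hf; lia. rewrite IHN, Hf; auto; try ring. Qed.

Lemma sum_single (f : nat -> R) N i0 : (i0 <= N)%nat -> (forall i, i <> i0 -> f i = 0) -> sum_f_R0 f N = f i0.
Proof.
  induction N; intros Hi Hf; simpl.
  - replace i0 with 0%nat by lia. auto.
  - destruct (Nat.eq_dec i0 (S N)) as [->|Hne].
    + rewrite sum_zero. ring. intros; apply Hf; lia.
    + rewrite IHN by (auto; lia). rewrite (Hf (S N)) by auto. ring.
Qed.


Lemma poly_cont (C : nat -> R) E x : continuity_pt (fun u => sum_f_R0 (fun k => C k * u ^ k) E) x.
Proof.
  apply continuity_pt_filterlim.
  change (continuous (fun u => sum_f_R0 (fun k => C k * u ^ k) E) x).
  induction E.
  - simpl. apply exd_cont. auto_derive. auto.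
  - simpl. assert (H2 : continuous (fun u => C (S E) * (u * u ^ E)) x) by (apply exd_cont; auto_derive; auto).
    exact (@continuous_plus R_UniformSpace R_AbsRing R_NormedModule _ _ x IHE H2).
Qed.

Lemma poly_at0 (C : nat -> R) E : sum_f_R0 (fun k => C k * 0 ^ k) E = C 0%nat.
Proof. induction E; simpl. ring. rewrite IHE. ring. Qed.

Lemma poly_zero0 (C : nat -> R) E : (forall u, 0 < u -> sum_f_R0 (fun k => C k * u ^ k) E = 0) -> C 0%nat = 0.
Proof.
  intros Hz. destruct (Req_dec (C 0%nat) 0) as [|Hne]; auto. exfalso.
  pose proof (poly_cont C E 0) as Hc.
  destruct (Hc (Rabs (C 0%nat))) as [alp [Ha Hb]]. apply Rabs_pos_lt; auto.
  specialize (Hb (alp / 2)). simpl in Hb. unfold R_dist in Hb.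
  rewrite poly_at0, Hz in Hb by lra.
  assert (Rabs (0 - C 0%nat) < Rabs (C 0%nat)). apply Hb. split. split. exact I. apply Rlt_not_eq. lra.
  rewrite Rminus_0_r, Rabs_right; lra.
  rewrite Rabs_minus_sym, Rminus_0_r in H. lra.
Qed.

Lemma sum_scal2 (f : nat -> R) N c : c * sum_f_R0 f N = sum_f_R0 (fun i => c * f i) N.
Proof. induction N; simpl; auto. rewrite <- IHN. ring. Qed.

Lemma poly_zero E : forall (C : nat -> R), (forall u, 0 < u -> sum_f_R0 (fun k => C k * u ^ k) E = 0) ->
  forall k, (k <= E)%nat -> C k = 0.
Proof.
  induction E; intros C Hz k Hk.
  - replace k with 0%nat by lia. apply (poly_zero0 C 0). auto.
  - pose proof (poly_zero0 C (S E) Hz) as H0.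
    destruct k as [|k]; auto.
    apply (IHE (fun k => C (S k))); [|lia].
    intros u Hu. specialize (Hz u Hu). rewrite decomp_sum in Hz by lia. simpl pred in Hz.
    rewrite H0 in Hz.
    assert (u * sum_f_R0 (fun k => C (S k) * u ^ k) E = 0).
    { rewrite sum_scal2. rewrite <- Hz. simpl. rewrite Rmult_0_l, Rplus_0_l. apply sum_eq. intros; simpl; ring. }
    apply Rmult_integral in H. destruct H; auto. lra.
Qed.

Lemma pad (f : nat -> R) N d : (forall k, (N < k)%nat -> (k <= N + d)%nat -> f k = 0) ->
  sum_f_R0 f (N + d) = sum_f_R0 f N.
Proof.
  induction d; intros Hf. rewrite Nat.add_0_r; auto.
  replace (N + S d)%nat with (S (N + d)) by lia. simpl. rewrite IHd by (intros; apply Hf; lia).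
  rewrite Hf by lia. ring.
Qed.

Lemma shift (C : nat -> R) N u : forall s,
  sum_f_R0 (fun k => (if Nat.leb s k then C (k - s)%nat else 0) * u ^ k) (N + s) =
  u ^ s * sum_f_R0 (fun k => C k * u ^ k) N.
Proof.
  induction s.
  - rewrite Nat.add_0_r. simpl. rewrite Rmult_1_l. apply sum_eq. intros. rewrite Nat.sub_0_r. auto.
  - replace (N + S s)%nat with (S (N + s)) by lia. rewrite decomp_sum by lia. simpl pred.
    simpl Nat.leb at 1. rewrite Rmult_0_l, Rplus_0_l.
    transitivity (u * sum_f_R0 (fun k => (if Nat.leb s k then C (k - s)%nat else 0) * u ^ k) (N + s)).
    rewrite sum_scal2. apply sum_eq. intros i _. simpl Nat.leb. simpl Nat.sub. simpl pow. ring.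
    rewrite IHs. simpl. ring.
Qed.

Fixpoint Hc (m q k : nat) : R :=
  match q with
  | O => if Nat.eqb k 0 then 1 else 0
  | S q' => (if Nat.leb 2 k then Hc m q' (k - 2) else 0) + (if Nat.leb (2 * m) k then Hc m q' (k - 2 * m) else 0)
  end.

Lemma Hc_low m q : (2 <= m)%nat -> forall k, (k < 2 * q)%nat -> Hc m q k = 0.
Proof.
  intros Hm. induction q; intros k Hk; cbn [Hc]. lia.
  destruct (Nat.leb_spec 2 k); destruct (Nat.leb_spec (2 * m) k); rewrite ?IHq by lia; ring.
Qed.

Lemma Hc_piv m q : (2 <= m)%nat -> Hc m q (2 * q) = 1.
Proof.
  intros Hm. induction q; cbn [Hc]. auto.
  replace (2 * S q)%nat with (2 * q + 2)%nat by lia.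
  destruct (Nat.leb_spec 2 (2 * q + 2)); [|lia].
  replace (2 * q + 2 - 2)%nat with (2 * q)%nat by lia. rewrite IHq.
  destruct (Nat.leb_spec (2 * m) (2 * q + 2)). rewrite Hc_low by lia. ring. ring.
Qed.

Lemma Hc_high m q : (1 <= m)%nat -> forall k, (2 * m * q < k)%nat -> Hc m q k = 0.
Proof.
  intros Hm. induction q; intros k Hk; cbn [Hc].
  destruct (Nat.eqb_spec k 0); [lia|auto].
  destruct (Nat.leb_spec 2 k); destruct (Nat.leb_spec (2 * m) k); rewrite ?IHq by nia; ring.
Qed.

Lemma Hc_poly m q : (1 <= m)%nat -> forall u, (u ^ 2 + u ^ (2 * m)) ^ q = sum_f_R0 (fun k => Hc m q k * u ^ k) (2 * m * q).
Proof.
  intros Hm. induction q; intros u.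
  - rewrite Nat.mul_0_r. simpl. ring.
  - cbn [Hc].
    transitivity (sum_f_R0 (fun k => (if Nat.leb 2 k then Hc m q (k - 2) else 0) * u ^ k) (2 * m * S q) +
                  sum_f_R0 (fun k => (if Nat.leb (2 * m) k then Hc m q (k - 2 * m) else 0) * u ^ k) (2 * m * S q)).
    2:{ rewrite <- sum_plus. apply sum_eq. intros; ring. }
    assert (E1 : sum_f_R0 (fun k => (if Nat.leb 2 k then Hc m q (k - 2) else 0) * u ^ k) (2 * m * S q) =
                 sum_f_R0 (fun k => (if Nat.leb 2 k then Hc m q (k - 2) else 0) * u ^ k) (2 * m * q + 2)).
    { replace (2 * m * S q)%nat with (2 * m * q + 2 + (2 * m - 2))%nat by nia. apply pad.
      intros k Hk _. destruct (Nat.leb_spec 2 k). rewrite Hc_high by lia. ring. ring. }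
    rewrite E1.
    replace (2 * m * S q)%nat with (2 * m * q + 2 * m)%nat by nia.
    rewrite !shift. rewrite <- IHq. simpl. ring.
Qed.

Definition rep E (f : R -> R) (x : nat * (nat -> R)) :=
  (forall u, f u = sum_f_R0 (fun k => snd x k * u ^ k) E) /\ snd x (fst x) = 1 /\
  (fst x <= E)%nat /\ forall k, (k < fst x)%nat -> snd x k = 0.

Fixpoint csum (zs : list (R * (nat * (nat -> R)))) k : R :=
  match zs with nil => 0 | z :: zs' => fst z * snd (snd z) k + csum zs' k end.

Lemma lincomb_poly E fs it : Forall2 (rep E) fs it -> forall cs, length cs = length fs -> forall u,
  lincomb fs cs u = sum_f_R0 (fun k => csum (combine cs it) k * u ^ k) E.
Proof.
  induction 1 as [|f x fs it Hr HF IH]; intros cs Hl u.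
  - destruct cs; simpl; symmetry; apply sum_zero; intros; ring.
  - destruct cs as [|c cs]; simpl in Hl; [lia|]. simpl.
    rewrite IH by lia. rewrite (proj1 Hr). rewrite sum_scal2, <- sum_plus. apply sum_eq. intros; ring.
Qed.

Lemma csum_zero l k : (forall z, In z l -> fst z * snd (snd z) k = 0) -> csum l k = 0.
Proof. induction l; simpl; intros; auto. rewrite H, IHl; auto. ring. Qed.

Lemma csum_app l1 l2 k : csum (l1 ++ l2) k = csum l1 k + csum l2 k.
Proof. induction l1; simpl. ring. rewrite IHl1. ring. Qed.

Lemma extract zs : NoDup (map (fun z => fst (snd z)) zs) ->
  (forall z, In z zs -> snd (snd z) (fst (snd z)) = 1 /\ forall k, (k < fst (snd z))%nat -> snd (snd z) k = 0) ->
  (forall z, In z zs -> csum zs (fst (snd z)) = 0) ->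
  forall z, In z zs -> fst z = 0.
Proof.
  intros Hnd Hp Hz.
  assert (forall B z, In z zs -> (fst (snd z) < B)%nat -> fst z = 0).
  { induction B; intros z Hin Hlt; [lia|].
    destruct (Nat.eq_dec (fst (snd z)) B) as [HB|HB]; [|apply IHB; auto; lia].
    destruct (in_split z zs Hin) as [l1 [l2 Hs]].
    pose proof (Hz z Hin) as Hc. rewrite Hs in Hc. rewrite csum_app in Hc. simpl in Hc.
    rewrite Hs, map_app in Hnd. simpl in Hnd. apply NoDup_remove_2 in Hnd.
    assert (Hzero : forall w, In w (l1 ++ l2) -> fst w * snd (snd w) (fst (snd z)) = 0).
    { intros w Hw. assert (Hw' : In w zs) by (rewrite Hs; apply in_app_or in Hw; apply in_or_app; simpl; tauto).
      assert (fst (snd w) <> fst (snd z)).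
      { intros Heq. apply Hnd. rewrite <- map_app. apply in_map_iff. exists w. auto. }
      destruct (Nat.lt_ge_cases (fst (snd w)) B).
      - rewrite (IHB w Hw') by auto. ring.
      - rewrite (proj2 (Hp w Hw')) by lia. ring. }
    rewrite !csum_zero in Hc by (intros; apply Hzero; apply in_or_app; tauto).
    rewrite (proj1 (Hp z Hin)) in Hc. lra. }
  intros z Hin. apply (H (S (fst (snd z))) z Hin). lia.
Qed.

Lemma Forall2_in_r {A B} (Rl : A -> B -> Prop) l l' y : Forall2 Rl l l' -> In y l' -> exists x, In x l /\ Rl x y.
Proof.
  induction 1; simpl; [tauto|]. intros [<-|Hin]. exists x; auto.
  destruct (IHForall2 Hin) as [z [? ?]]. exists z; auto.
Qed.

Lemma map_snd_combine {A B} (l : list A) (l' : list B) : length l = length l' -> map snd (combine l l') = l'.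
Proof. revert l'; induction l; destruct l'; simpl; intros; auto; try lia. f_equal. auto. Qed.

Lemma in_combine_ex {A B} (l : list A) (l' : list B) x : length l = length l' -> In x l -> exists y, In (x, y) (combine l l').
Proof.
  revert l'; induction l; destruct l'; simpl; intros; try lia; try tauto.
  destruct H0 as [<-|Hin]. eauto. destruct (IHl l') as [y Hy]; auto. eauto.
Qed.

Lemma indep_gen E fs it : Forall2 (rep E) fs it -> NoDup (map fst it) -> lin_indep_pos fs.
Proof.
  intros HF Hnd cs Hl Hz.
  assert (Hli : length fs = length it) by (eapply Forall2_length; eauto).
  assert (Hc : forall k, (k <= E)%nat -> csum (combine cs it) k = 0).
  { apply (poly_zero E (csum (combine cs it))). intros u Hu. rewrite <- (lincomb_poly E fs it HF cs Hl u). auto. }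
  assert (Hit : forall x, In x it -> exists f, In f fs /\ rep E f x) by (intros; eapply Forall2_in_r; eauto).
  apply Forall_forall. intros c Hin.
  destruct (in_combine_ex cs it c) as [y Hy]; [lia|auto|].
  apply (extract (combine cs it)) with (z := (c, y)); auto.
  - rewrite <- map_map, map_snd_combine by lia. auto.
  - intros z Hzin. destruct z as [c' x]. apply in_combine_r in Hzin. destruct (Hit x Hzin) as [f [_ [_ [H1 [_ H3]]]]].
    simpl. auto.
  - intros z Hzin. destruct z as [c' x]. apply in_combine_r in Hzin. destruct (Hit x Hzin) as [f [_ [_ [_ [H2 _]]]]].
    apply Hc. auto.
Qed.

Definition mc (e : nat) : nat -> R := fun k => if Nat.eqb k e then 1 else 0.

Lemma rep_mono E e : (e <= E)%nat -> rep E (fun u => u ^ e) (e, mc e).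
Proof.
  intros He. split; [|split; [|split]]; simpl.
  - intros u. rewrite (sum_single _ E e). unfold mc. rewrite Nat.eqb_refl. ring. auto.
    intros i Hi; unfold mc. destruct (Nat.eqb_spec i e). lia. ring.
  - unfold mc. rewrite Nat.eqb_refl. auto.
  - auto.
  - intros k Hk. unfold mc. destruct (Nat.eqb_spec k e); [lia|auto].
Qed.

Lemma rep_hc E m q : (2 <= m)%nat -> (2 * m * q <= E)%nat -> rep E (fun u => (u ^ 2 + u ^ (2 * m)) ^ q) (2 * q, Hc m q)%nat.
Proof.
  intros Hm HE. split; [|split; [|split]]; cbn [fst snd].
  - intros u. rewrite Hc_poly by lia. replace E with (2 * m * q + (E - 2 * m * q))%nat by lia.
    rewrite pad. auto. intros; rewrite Hc_high by lia; ring.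
  - apply Hc_piv; lia.
  - nia.
  - intros; apply Hc_low; lia.
Qed.

Lemma F2map {A B C} (Rl : B -> C -> Prop) (f : A -> B) g l : (forall x, In x l -> Rl (f x) (g x)) -> Forall2 Rl (map f l) (map g l).
Proof. induction l; simpl; intros; constructor; auto. Qed.

Lemma F2fm {A B C} (Rl : B -> C -> Prop) (f : A -> list B) g l : (forall x, In x l -> Forall2 Rl (f x) (g x)) -> Forall2 Rl (flat_map f l) (flat_map g l).
Proof. induction l; simpl; intros; auto. apply Forall2_app; auto. Qed.

Lemma map_fm {A B C} (f : B -> C) (g : A -> list B) l : map f (flat_map g l) = flat_map (fun x => map f (g x)) l.
Proof. induction l; simpl; auto. rewrite map_app, IHl. auto. Qed.

Lemma NoDup_fm {A B} (f : A -> list B) l : NoDup l -> (forall x, In x l -> NoDup (f x)) ->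
  (forall x y a, In x l -> In y l -> x <> y -> In a (f x) -> In a (f y) -> False) -> NoDup (flat_map f l).
Proof.
  induction l; simpl; intros Hnd Hf Hd. constructor.
  inversion Hnd; subst. apply NoDup_app.
  apply Hf; auto.
  apply IHl; auto. intros x y b Hx Hy; apply Hd; auto.
  intros b Hb Hb'. apply in_flat_map in Hb'. destruct Hb' as [y [Hy Hby]].
  apply (Hd a y b); auto. intros ->. auto.
Qed.

Lemma NoDup_map_inj {A B} (f : A -> B) l : NoDup l -> (forall x y, In x l -> In y l -> f x = f y -> x = y) -> NoDup (map f l).
Proof. intros. apply NoDup_map_NoDup_ForallPairs; auto. Qed.

Lemma divlemma k p p' a b : (p < k)%nat -> (p' < k)%nat -> (p + k * a = p' + k * b)%nat -> p = p' /\ a = b.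
Proof.
  intros H1 H2 H3. destruct (Nat.lt_trichotomy a b) as [Hab|[Hab|Hab]].
  - assert (k * b >= k * a + k)%nat by nia. lia.
  - subst. lia.
  - assert (k * a >= k * b + k)%nat by nia. lia.
Qed.

Definition items (m n : nat) : list (nat * (nat -> R)) :=
  map (fun p => (2 * p + 1, mc (2 * p + 1)))%nat (seq 0 (n / 2 + 1))
  ++ flat_map (fun p => map (fun kk => (2 * p + (m - 1) * (kk + 1) + 1, mc (2 * p + (m - 1) * (kk + 1) + 1)))%nat
                            (seq 0 (2 * p + 1))) (seq 0 (n / 2 + 1))
  ++ map (fun l => (2 * (l + 1), Hc m (l + 1)))%nat (seq 0 ((n + 1) / 2)).

Lemma indep m k n : m = (2 * k + 1)%nat -> (n < m - 1)%nat -> lin_indep_pos (basis m n).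
Proof.
  intros Hm Hn. assert (Hk : (1 <= k)%nat) by lia.
  assert (H2n : forall p, (p < n / 2 + 1)%nat -> (2 * p <= n)%nat).
  { intros p Hp. pose proof (Nat.mul_div_le n 2). nia. }
  assert (H2n' : forall l, (l < (n + 1) / 2)%nat -> (2 * (l + 1) <= n + 1)%nat).
  { intros l Hl. pose proof (Nat.mul_div_le (n + 1) 2). nia. }
  set (E := (2 * m * (n + 2) + n + 2)%nat).
  apply (indep_gen E (basis m n) (items m n)).
  - unfold basis, items. apply Forall2_app; [|apply Forall2_app].
    + apply F2map. intros p Hp. apply in_seq in Hp. apply rep_mono. specialize (H2n p). unfold E. nia.
    + apply F2fm. intros p Hp. apply in_seq in Hp. apply F2map. intros kk Hkk. apply in_seq in Hkk.
      apply rep_mono. specialize (H2n p). unfold E. subst m. replace (2 * k + 1 - 1)%nat with (2 * k)%nat by lia. nia.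
    + apply F2map. intros l Hl. apply in_seq in Hl. apply rep_hc. lia. specialize (H2n' l ltac:(lia)). unfold E. nia.
  - unfold items. rewrite !map_app, !map_map, map_fm. cbn [fst].
    subst m. replace (2 * k + 1 - 1)%nat with (2 * k)%nat by lia.
    apply NoDup_app; [|apply NoDup_app|].
    + apply NoDup_map_inj. apply seq_NoDup. intros; lia.
    + apply NoDup_fm. apply seq_NoDup.
      * intros p Hp. rewrite map_map. cbn [fst]. apply NoDup_map_inj. apply seq_NoDup. intros; nia.
      * intros p p' a Hp Hp' Hne Ha Ha'. rewrite map_map in Ha, Ha'. cbn [fst] in Ha, Ha'.
        apply in_seq in Hp. apply in_seq in Hp'. pose proof (H2n p ltac:(lia)). pose proof (H2n p' ltac:(lia)).
        apply in_map_iff in Ha. apply in_map_iff in Ha'. destruct Ha as [kk [<- _]]. destruct Ha' as [kk' [Heq _]].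
        destruct (divlemma k p p' (kk + 1) (kk' + 1)); try lia.
    + apply NoDup_map_inj. apply seq_NoDup. intros; lia.
    + intros a Ha Ha'. apply in_flat_map in Ha. destruct Ha as [p [_ Ha]]. rewrite map_map in Ha. cbn [fst] in Ha.
      apply in_map_iff in Ha. destruct Ha as [kk [<- _]].
      apply in_map_iff in Ha'. destruct Ha' as [l [Heq _]]. lia.
    + intros a Ha Ha'. apply in_map_iff in Ha. destruct Ha as [p [<- Hp]]. apply in_seq in Hp.
      specialize (H2n p ltac:(lia)).
      apply in_app_or in Ha'. destruct Ha' as [Ha'|Ha'].
      * apply in_flat_map in Ha'. destruct Ha' as [p' [_ Ha']]. rewrite map_map in Ha'. cbn [fst] in Ha'.
        apply in_map_iff in Ha'. destruct Ha' as [kk [Heq _]]. nia.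
      * apply in_map_iff in Ha'. destruct Ha' as [l [Heq _]]. lia.
Qed.

Definition hh m u := u ^ 2 + u ^ (2 * m).

Lemma hh_pos m u : 0 < u -> 0 < hh m u.
Proof. intros. unfold hh. pose proof (pow_lt u 2 H). pose proof (pow_lt u (2*m) H). lra. Qed.

Lemma hh_mono m v w : 0 < v -> v < w -> hh m v < hh m w.
Proof.
  intros. unfold hh. assert (v ^ 2 < w ^ 2) by (simpl; nra).
  assert (v ^ (2*m) <= w ^ (2*m)) by (apply pow_incr; lra). lra.
Qed.

Lemma u_of_h_eq m u : 0 < u -> u_of_h m (hh m u) = u.
Proof.
  intros Hu. unfold u_of_h.
  destruct (epsilon_spec (inhabits 0) (fun v => 0 < v /\ v ^ 2 + v ^ (2 * m) = hh m u)) as [H1 H2].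
  { exists u. split; auto. }
  set (v := epsilon _ _) in *. fold (hh m v) in H2.
  destruct (Rtotal_order v u) as [Hl|[He|Hg]]; auto.
  - pose proof (hh_mono m v u H1 Hl). lra.
  - pose proof (hh_mono m u v Hu Hg). lra.
Qed.

Lemma theta_vals m u : 0 < u ->
  sin (theta0 m (hh m u)) = u / sqrt (hh m u) /\ cos (theta0 m (hh m u)) = u ^ m / sqrt (hh m u).
Proof.
  intros Hu. unfold theta0. rewrite u_of_h_eq by auto.
  pose proof (hh_pos m u Hu) as Hh. pose proof (sqrt_lt_R0 _ Hh) as Hs.
  pose proof (pow2_sqrt (hh m u) (Rlt_le _ _ Hh)) as Hs2.
  set (s := sqrt (hh m u)) in *. set (x := u ^ m / s).
  assert (Hx2 : x ^ 2 = u ^ (2 * m) / hh m u).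
  { unfold x. rewrite Nat.mul_comm, pow_mult. rewrite <- Hs2. field. lra. }
  assert (Hx0 : 0 <= x). { unfold x. apply Rle_mult_inv_pos; auto. apply pow_le; lra. }
  assert (Hx1 : x ^ 2 <= 1).
  { rewrite Hx2. unfold hh. apply (Rmult_le_reg_r (hh m u)); auto. unfold Rdiv. rewrite Rmult_assoc, Rinv_l by lra.
    unfold hh. pose proof (pow_lt u 2 Hu). lra. }
  assert (Hxr : -1 <= x <= 1) by (split; nra).
  split.
  - rewrite sin_acos by auto. rewrite Rsqr_pow2, Hx2.
    replace (1 - u ^ (2 * m) / hh m u) with ((u / s) ^ 2).
    apply sqrt_pow2. apply Rle_mult_inv_pos; lra.
    unfold Rdiv. rewrite Rpow_mult_distr. rewrite pow_inv, Hs2. unfold hh. field. fold (hh m u). lra.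
  - apply cos_acos; auto.
Qed.

Definition InSp (fs : list (R -> R)) (g : R -> R) :=
  exists cs, length cs = length fs /\ forall u, 0 < u -> g u = lincomb fs cs u.

Lemma lincomb_zero fs u : lincomb fs (repeat 0 (length fs)) u = 0.
Proof. induction fs; simpl; auto. rewrite IHfs. ring. Qed.

Lemma InSp_zero fs : InSp fs (fun _ => 0).
Proof. exists (repeat 0 (length fs)). split. apply repeat_length. intros; rewrite lincomb_zero; auto. Qed.

Lemma lincomb_plus fs : forall cs1 cs2 u, length cs1 = length fs -> length cs2 = length fs ->
  lincomb fs (map (fun p => fst p + snd p) (combine cs1 cs2)) u = lincomb fs cs1 u + lincomb fs cs2 u.
Proof.
  induction fs as [|f fs IH]; intros [|c1 cs1] [|c2 cs2] u H1 H2; simpl in *; try lia; try ring.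
  rewrite IH by lia. ring.
Qed.

Lemma InSp_plus fs g1 g2 : InSp fs g1 -> InSp fs g2 -> InSp fs (fun u => g1 u + g2 u).
Proof.
  intros [c1 [L1 E1]] [c2 [L2 E2]]. exists (map (fun p => fst p + snd p) (combine c1 c2)). split.
  rewrite length_map, length_combine. lia.
  intros u Hu. rewrite lincomb_plus by auto. rewrite E1, E2; auto.
Qed.

Lemma lincomb_scal fs : forall cs c u, lincomb fs (map (Rmult c) cs) u = c * lincomb fs cs u.
Proof. induction fs as [|f fs IH]; intros [|c1 cs] c u; simpl; try ring. rewrite IH. ring. Qed.

Lemma InSp_scal fs c g : InSp fs g -> InSp fs (fun u => c * g u).
Proof.
  intros [cs [L E]]. exists (map (Rmult c) cs). split. rewrite length_map; auto.
  intros u Hu. rewrite lincomb_scal, E; auto.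
Qed.

Lemma InSp_ext fs g1 g2 : InSp fs g1 -> (forall u, 0 < u -> g1 u = g2 u) -> InSp fs g2.
Proof. intros [cs [L E]] He. exists cs. split; auto. intros; rewrite <- He, E; auto. Qed.

Lemma map_unit_zero s : forall len t, (s < t)%nat ->
  map (fun j => if Nat.eqb j s then 1 else 0) (seq t len) = repeat 0 len.
Proof.
  induction len; intros t Ht; simpl; auto.
  destruct (Nat.eqb_spec t s); [lia|]. f_equal. apply IHlen. lia.
Qed.

Lemma lincomb_unit fs : forall s i u, (i < length fs)%nat ->
  lincomb fs (map (fun j => if Nat.eqb j (s + i) then 1 else 0) (seq s (length fs))) u = nth i fs (fun _ => 0) u.
Proof.
  induction fs as [|f fs IH]; intros s i u Hi; simpl in *; [lia|].
  destruct i as [|i].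
  - rewrite Nat.add_0_r, Nat.eqb_refl.
    replace (map (fun j : nat => if Nat.eqb j s then 1 else 0) (seq (S s) (length fs)))
      with (repeat 0 (length fs)). rewrite lincomb_zero. ring.
    symmetry. apply map_unit_zero. lia.
  - replace (Nat.eqb s (s + S i)) with false by (symmetry; apply Nat.eqb_neq; lia).
    replace (s + S i)%nat with (S s + i)%nat by lia. rewrite IH by lia. ring.
Qed.

Lemma InSp_in fs f : In f fs -> InSp fs f.
Proof.
  intros Hin. destruct (In_nth fs f (fun _ => 0) Hin) as [i [Hi Hn]].
  exists (map (fun j => if Nat.eqb j (0 + i) then 1 else 0) (seq 0 (length fs))). split.
  rewrite length_map, length_seq; auto.
  intros u _. rewrite lincomb_unit by auto. rewrite Hn. auto.
Qed.

Lemma InSp_sum fs (G : nat -> R -> R) N : (forall i, (i <= N)%nat -> InSp fs (G i)) ->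
  InSp fs (fun u => sum_f_R0 (fun i => G i u) N).
Proof.
  induction N; intros HG; simpl.
  - apply HG; lia.
  - apply InSp_plus. apply IHN; intros; apply HG; lia. apply HG; lia.
Qed.

Lemma len_fm m N : length (flat_map (fun p => map (fun kk => fun u : R => u ^ (2 * p + (m - 1) * (kk + 1) + 1))
                            (seq 0 (2 * p + 1))) (seq 0 N)) = (N * N)%nat.
Proof.
  induction N. auto. rewrite seq_S, flat_map_app, length_app, IHN. simpl.
  rewrite app_nil_r, length_map, length_seq. lia.
Qed.

Lemma len_basis m n : length (basis m n) = (n / 2 + 1 + (n / 2 + 1) * (n / 2 + 1) + (n + 1) / 2)%nat.
Proof.
  unfold basis. rewrite !length_app, !length_map, len_fm, !length_seq. lia.
Qed.

Lemma part1 m n : Z.of_nat (length (basis m n)) =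
    ((Z.of_nat n - 1) / 2 + (Z.of_nat n / 2) ^ 2 + 3 * (Z.of_nat n / 2) + 3)%Z.
Proof.
  rewrite len_basis. rewrite !Nat2Z.inj_add, !Nat2Z.inj_mul, !Nat2Z.inj_div, !Nat2Z.inj_add.
  change (Z.of_nat 2) with 2%Z. change (Z.of_nat 1) with 1%Z.
  replace (Z.of_nat n + 1)%Z with ((Z.of_nat n - 1) + 1 * 2)%Z by ring.
  rewrite Z.div_add by lia. rewrite Nat2Z.inj_div. change (Z.of_nat 2) with 2%Z. ring.
Qed.

Lemma eqA a b lo hi : INR (a+1) * J a b lo hi - INR (a+b+2) * J (a+2) b lo hi
  = sin hi ^ (a+1) * cos hi ^ (b+1) - sin lo ^ (a+1) * cos lo ^ (b+1).
Proof.
  rewrite <- L2. replace (a+1-1)%nat with a by lia. replace (b+1-1)%nat with b by lia.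
  replace (b+1+1)%nat with (b+2)%nat by lia. replace (a+1+1)%nat with (a+2)%nat by lia.
  rewrite (L1 a b). rewrite !plus_INR. simpl. ring.
Qed.

Lemma eqB a b lo hi : INR (a+b+2) * J a (b+2) lo hi - INR (b+1) * J a b lo hi
  = sin hi ^ (a+1) * cos hi ^ (b+1) - sin lo ^ (a+1) * cos lo ^ (b+1).
Proof.
  rewrite <- L2. replace (a+1-1)%nat with a by lia. replace (b+1-1)%nat with b by lia.
  replace (b+1+1)%nat with (b+2)%nat by lia. replace (a+1+1)%nat with (a+2)%nat by lia.
  rewrite (L1 a b). rewrite !plus_INR. simpl. ring.
Qed.

Lemma powneg x n : (- x) ^ n = (-1) ^ n * x ^ n.
Proof. rewrite <- Rpow_mult_distr. f_equal. ring. Qed.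

Lemma sin_mPI t : sin (t - PI) = - sin t.
Proof. pose proof (neg_sin (t - PI)). replace (t - PI + PI) with t in H by ring. lra. Qed.
Lemma cos_mPI t : cos (t - PI) = - cos t.
Proof. pose proof (neg_cos (t - PI)). replace (t - PI + PI) with t in H by ring. lra. Qed.

Lemma m1even p : (-1) ^ (2 * p) = 1.
Proof. apply pow_1_even. Qed.
Lemma m1odd p : (-1) ^ (2 * p + 1) = -1.
Proof. rewrite Nat.add_1_r. apply pow_1_odd. Qed.

Lemma shiftmono i j t : sin (t - PI) ^ i * cos (t - PI) ^ j = (-1) ^ (i + j) * (sin t ^ i * cos t ^ j).
Proof. rewrite sin_mPI, cos_mPI, !powneg, pow_add. ring. Qed.

Inductive H : nat -> (R -> R -> R) -> Prop :=
| Hmono i j : H (i + j) (fun s c => s ^ i * c ^ j)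
| Hplus D F G : H D F -> H D G -> H D (fun s c => F s c + G s c)
| Hscal D (k : R) F : H D F -> H D (fun s c => k * F s c)
| Hext D F G : H D F -> (forall s c, F s c = G s c) -> H D G.

Lemma Hmono' D i j : (i + j = D)%nat -> H D (fun s c => s ^ i * c ^ j).
Proof. intros <-. constructor. Qed.

Lemma H_lift D F : H D F -> H (D + 2) (fun s c => F s c * (s ^ 2 + c ^ 2)).
Proof.
  induction 1.
  - eapply Hext. apply Hplus. apply (Hmono' _ (i+2) j). lia. apply (Hmono' _ i (j+2)). lia.
    intros; simpl. rewrite !pow_add; simpl; ring.
  - apply (Hext _ (fun s c => F s c * (s^2+c^2) + G s c * (s^2+c^2))). apply Hplus; eauto. intros; simpl; ring.
  - apply (Hext _ (fun s c => k * (F s c * (s^2+c^2)))). apply Hscal; eauto. intros; simpl; ring.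
  - apply (Hext _ (fun s c => F s c * (s^2+c^2))). eauto. intros; simpl; rewrite H1; ring.
Qed.

Lemma H_neg D F : H D F -> forall s c, F (-s) (-c) = (-1) ^ D * F s c.
Proof.
  induction 1; intros.
  - rewrite !powneg, pow_add. ring.
  - rewrite IHH1, IHH2. ring.
  - rewrite IHH. ring.
  - rewrite <- !H1. auto.
Qed.

Definition Jp a b t0 : R := J a b (t0 - PI) t0.

Definition Pst a b :=
  (forall p, (a + b = 2 * p)%nat -> exists kappa, forall t0, Jp a b t0 = kappa) /\
  (forall p, (a + b = 2 * p + 1)%nat -> exists F, H (a + b) F /\ forall t0, Jp a b t0 = 2 * F (sin t0) (cos t0)).

Lemma sc1 t : sin t ^ 2 + cos t ^ 2 = 1.
Proof. pose proof (sin2_cos2 t). unfold Rsqr in H0. simpl. lra. Qed.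

Lemma stepA a b : Pst a b -> Pst (a + 2) b.
Proof.
  intros [Pe Po]. split.
  - intros p Hp. destruct (Pe (p - 1)%nat) as [kap Hk]. lia.
    exists (INR (a+1) * kap / INR (a+b+2)). intros t0.
    pose proof (eqA a b (t0 - PI) t0). rewrite shiftmono in H0.
    replace (a + 1 + (b + 1))%nat with (2 * p)%nat in H0 by lia. rewrite m1even in H0.
    unfold Jp in *. rewrite Hk in H0. assert (INR (a+b+2) <> 0) by (apply not_0_INR; lia).
    field_simplify_eq; auto. lra.
  - intros p Hp. destruct (Po (p - 1)%nat) as [F [HF Hk]]. lia.
    exists (fun s c => / INR (a+b+2) * (INR (a+1) * (F s c * (s ^ 2 + c ^ 2)) + (-1) * (s ^ (a+1) * c ^ (b+1)))).
    split.
    + apply Hscal. apply Hplus. apply Hscal. replace (a + 2 + b)%nat with (a + b + 2)%nat by lia.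
      apply H_lift; auto. apply Hscal. apply Hmono'. lia.
    + intros t0. pose proof (eqA a b (t0 - PI) t0). rewrite shiftmono in H0.
      replace (a + 1 + (b + 1))%nat with (2 * p + 1)%nat in H0 by lia. rewrite m1odd in H0.
      unfold Jp in *. rewrite Hk in H0. rewrite sc1. assert (INR (a+b+2) <> 0) by (apply not_0_INR; lia).
      field_simplify_eq; auto. lra.
Qed.

Lemma stepB a b : Pst a b -> Pst a (b + 2).
Proof.
  intros [Pe Po]. split.
  - intros p Hp. destruct (Pe (p - 1)%nat) as [kap Hk]. lia.
    exists (INR (b+1) * kap / INR (a+b+2)). intros t0.
    pose proof (eqB a b (t0 - PI) t0). rewrite shiftmono in H0.
    replace (a + 1 + (b + 1))%nat with (2 * p)%nat in H0 by lia. rewrite m1even in H0.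
    unfold Jp in *. rewrite Hk in H0. assert (INR (a+b+2) <> 0) by (apply not_0_INR; lia).
    field_simplify_eq; auto. lra.
  - intros p Hp. destruct (Po (p - 1)%nat) as [F [HF Hk]]. lia.
    exists (fun s c => / INR (a+b+2) * (INR (b+1) * (F s c * (s ^ 2 + c ^ 2)) + 1 * (s ^ (a+1) * c ^ (b+1)))).
    split.
    + apply Hscal. apply Hplus. apply Hscal. replace (a + (b + 2))%nat with (a + b + 2)%nat by lia.
      apply H_lift; auto. apply Hscal. apply Hmono'. lia.
    + intros t0. pose proof (eqB a b (t0 - PI) t0). rewrite shiftmono in H0.
      replace (a + 1 + (b + 1))%nat with (2 * p + 1)%nat in H0 by lia. rewrite m1odd in H0.
      unfold Jp in *. rewrite Hk in H0. rewrite sc1. assert (INR (a+b+2) <> 0) by (apply not_0_INR; lia).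
      field_simplify_eq; auto. lra.
Qed.

Lemma P00 : Pst 0 0.
Proof.
  split; intros p Hp; [|lia]. exists PI. intros t0. unfold Jp, J.
  rewrite (FTC (fun t => t)). ring. intros; auto_derive; auto. simpl; ring.
  intros; apply exd_cont; auto_derive; auto.
Qed.

Lemma P11 : Pst 1 1.
Proof.
  split; intros p Hp; [|lia]. exists 0. intros t0. unfold Jp, J.
  rewrite (FTC (fun t => sin t ^ 2 / 2)). rewrite sin_mPI. simpl; field.
  intros; auto_derive; auto. simpl; field.
  intros; apply exd_cont; auto_derive; auto.
Qed.

Lemma P10 : Pst 1 0.
Proof.
  split; intros p Hp; [lia|]. exists (fun s c => -1 * (s ^ 0 * c ^ 1)). split.
  apply Hscal. apply Hmono'. lia.
  intros t0. unfold Jp, J.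
  rewrite (FTC (fun t => - cos t)). rewrite cos_mPI. simpl; ring.
  intros; auto_derive; auto. simpl; ring.
  intros; apply exd_cont; auto_derive; auto.
Qed.

Lemma P01 : Pst 0 1.
Proof.
  split; intros p Hp; [lia|]. exists (fun s c => 1 * (s ^ 1 * c ^ 0)). split.
  apply Hscal. apply Hmono'. lia.
  intros t0. unfold Jp, J.
  rewrite (FTC (fun t => sin t)). rewrite sin_mPI. simpl; ring.
  intros; auto_derive; auto. simpl; ring.
  intros; apply exd_cont; auto_derive; auto.
Qed.

Lemma Pall : forall a b, Pst a b.
Proof.
  assert (HB : forall b, (Pst 0 b /\ Pst 1 b) /\ (Pst 0 (S b) /\ Pst 1 (S b))).
  { induction b as [|b IH].
    - split; split; auto using P00, P10, P01, P11.
    - destruct IH as [[H0 H1] [H2 H3]]. split; auto.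
      replace (S (S b)) with (b + 2)%nat by lia. split; apply stepB; auto. }
  assert (HA : forall a, (forall b, Pst a b) /\ (forall b, Pst (S a) b)).
  { induction a as [|a IH].
    - split; intros b; apply HB.
    - destruct IH as [H0 H1]. split; auto. intros b.
      replace (S (S a)) with (a + 2)%nat by lia. apply stepA; auto. }
  intros a b; apply HA.
Qed.

Definition Jm a b t0 : R := J a b t0 (t0 + PI).

Lemma Jm_Jp a b t0 : Jm a b t0 = Jp a b (t0 + PI).
Proof. unfold Jm, Jp. replace (t0 + PI - PI) with t0 by ring. auto. Qed.

Lemma Jfinal a b :
  (forall p, (a + b = 2 * p)%nat -> exists kappa, forall t0, Jp a b t0 = kappa /\ Jm a b t0 = kappa) /\
  (forall p, (a + b = 2 * p + 1)%nat -> exists F, H (a + b) F /\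
      forall t0, Jp a b t0 = 2 * F (sin t0) (cos t0) /\ Jm a b t0 = - (2 * F (sin t0) (cos t0))).
Proof.
  destruct (Pall a b) as [Pe Po]. split.
  - intros p Hp. destruct (Pe p Hp) as [k Hk]. exists k. intros t0. rewrite Jm_Jp. auto.
  - intros p Hp. destruct (Po p Hp) as [F [HF Hk]]. exists F. split; auto. intros t0.
    rewrite Jm_Jp. rewrite !Hk. rewrite neg_sin, neg_cos. rewrite (H_neg _ _ HF). rewrite Hp, m1odd. split; ring.
Qed.

Lemma J0pos q t0 : 0 < Jp 0 (2 * q) t0.
Proof.
  induction q as [|q IH].
  - unfold Jp, J. simpl. rewrite (FTC (fun t => t)). pose proof PI_RGT_0. lra.
    intros; auto_derive; auto. simpl; ring.
    intros; apply exd_cont; auto_derive; auto.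
  - pose proof (eqB 0 (2*q) (t0 - PI) t0) as H0. rewrite shiftmono in H0.
    replace (0 + 1 + (2*q + 1))%nat with (2 * (q+1))%nat in H0 by lia. rewrite m1even in H0.
    replace (2 * S q)%nat with (2 * q + 2)%nat by lia. unfold Jp in *.
    assert (A1 : 0 < INR (0 + 2*q + 2)) by (apply lt_0_INR; lia).
    assert (A2 : 0 < INR (2*q + 1)) by (apply lt_0_INR; lia).
    assert (A3 : INR (0 + 2 * q + 2) * J 0 (2 * q + 2) (t0 - PI) t0 = INR (2 * q + 1) * J 0 (2 * q) (t0 - PI) t0) by lra.
    assert (0 < INR (0 + 2 * q + 2) * J 0 (2 * q + 2) (t0 - PI) t0) by (rewrite A3; apply Rmult_lt_0_compat; auto).
    apply (Rmult_lt_reg_l (INR (0 + 2 * q + 2))); lra.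
Qed.

Lemma Dcx h t : Derive (circ_x h) t = sqrt h * cos t.
Proof. unfold circ_x; apply is_derive_unique; auto_derive; auto; ring. Qed.
Lemma Dcy h t : Derive (circ_y h) t = - (sqrt h * sin t).
Proof. unfold circ_y; apply is_derive_unique; auto_derive; auto; ring. Qed.

Lemma sum_comb (f g : nat -> R) N x y :
  sum_f_R0 f N * x + sum_f_R0 g N * y = sum_f_R0 (fun i => f i * x + g i * y) N.
Proof. induction N; simpl; [ring|]. rewrite <- IHN. ring. Qed.

Lemma RInt_sum (f : nat -> R -> R) N lo hi : (forall i, ex_RInt (f i) lo hi) ->
  ex_RInt (fun t => sum_f_R0 (fun i => f i t) N) lo hi /\
  RInt (fun t => sum_f_R0 (fun i => f i t) N) lo hi = sum_f_R0 (fun i => RInt (f i) lo hi) N.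
Proof.
  intros Hf. induction N as [|N [IH1 IH2]].
  - simpl. split; auto.
  - simpl. split.
    + apply (@ex_RInt_plus R_CompleteNormedModule); auto.
    + rewrite RInt_plusR; auto. rewrite IH2. auto.
Qed.

Lemma ex_term (c : R) a b lo hi : ex_RInt (fun t => c * (sin t ^ a * cos t ^ b)) lo hi.
Proof. apply exRI; intros; apply exd_cont; auto_derive; auto. Qed.

Lemma LI_expand n a b h lo hi :
  line_integral (poly2 n b) (fun x y => - poly2 n a x y) (circ_x h) (circ_y h) lo hi =
  sum_f_R0 (fun i => sum_f_R0 (fun j => b i j * sqrt h ^ (i+j+1) * J i (j+1) lo hi
                                      + a i j * sqrt h ^ (i+j+1) * J (i+1) j lo hi) (n - i)) n.
Proof.
  unfold line_integral.
  set (g := fun i j t => b i j * sqrt h ^ (i+j+1) * (sin t ^ i * cos t ^ (j+1))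
                       + a i j * sqrt h ^ (i+j+1) * (sin t ^ (i+1) * cos t ^ j)).
  transitivity (RInt (fun t => sum_f_R0 (fun i => sum_f_R0 (fun j => g i j t) (n - i)) n) lo hi).
  { apply RInt_ext. intros t _. rewrite Dcx, Dcy. unfold poly2. 
    replace (- sum_f_R0 (fun i : nat => sum_f_R0 (fun j : nat => a i j * (circ_x h t) ^ i * (circ_y h t) ^ j) (n - i)) n * - (sqrt h * sin t))
     with (sum_f_R0 (fun i : nat => sum_f_R0 (fun j : nat => a i j * (circ_x h t) ^ i * (circ_y h t) ^ j) (n - i)) n * (sqrt h * sin t)) by ring.
    rewrite sum_comb. apply sum_eq. intros i _. rewrite sum_comb. apply sum_eq. intros j _.
    unfold g, circ_x, circ_y. rewrite !Rpow_mult_distr, !pow_add. simpl. ring. }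
  assert (Hg : forall i j, ex_RInt (g i j) lo hi).
  { intros; unfold g. apply exRI; intros; apply exd_cont; auto_derive; auto. }
  assert (Hi : forall i, ex_RInt (fun t => sum_f_R0 (fun j => g i j t) (n - i)) lo hi).
  { intros i. apply (RInt_sum (g i)). auto. }
  rewrite (proj2 (RInt_sum (fun i t => sum_f_R0 (fun j => g i j t) (n - i)) n lo hi Hi)).
  apply sum_eq. intros i _. rewrite (proj2 (RInt_sum (g i) (n - i) lo hi (Hg i))).
  apply sum_eq. intros j _. unfold g. rewrite RInt_plusR by apply ex_term.
  rewrite !RInt_scalR by apply ex_sc. unfold J. ring.
Qed.

Definition Tm (ap bp am bm : nat -> nat -> R) h t0 i j : R :=
  bp i j * sqrt h ^ (i+j+1) * Jp i (j+1) t0 + ap i j * sqrt h ^ (i+j+1) * Jp (i+1) j t0 +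
  (bm i j * sqrt h ^ (i+j+1) * Jm i (j+1) t0 + am i j * sqrt h ^ (i+j+1) * Jm (i+1) j t0).

Lemma mel_expand m n ap bp am bm h :
  melnikov m n ap bp am bm h =
  sum_f_R0 (fun i => sum_f_R0 (fun j => Tm ap bp am bm h (theta0 m h) i j) (n - i)) n.
Proof.
  unfold melnikov. rewrite !LI_expand. rewrite <- sum_plus. apply sum_eq. intros i _.
  rewrite <- sum_plus. apply sum_eq. intros j _. unfold Tm, Jp, Jm. auto.
Qed.

Lemma in_basis1 m n p : (p <= n / 2)%nat -> In (fun u => u ^ (2 * p + 1)) (basis m n).
Proof.
  intros Hp. unfold basis. apply in_or_app. left. apply in_map_iff. exists p. split; auto.
  apply in_seq. lia.
Qed.

Lemma in_basis2 m n p kk : (p <= n / 2)%nat -> (kk <= 2 * p)%nat ->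
  In (fun u => u ^ (2 * p + (m - 1) * (kk + 1) + 1)) (basis m n).
Proof.
  intros Hp Hk. unfold basis. apply in_or_app. right. apply in_or_app. left.
  apply in_flat_map. exists p. split. apply in_seq; lia.
  apply in_map_iff. exists kk. split; auto. apply in_seq; lia.
Qed.

Lemma in_basis3 m n l : (l < (n + 1) / 2)%nat -> In (fun u => (u ^ 2 + u ^ (2 * m)) ^ (l + 1)) (basis m n).
Proof.
  intros Hl. unfold basis. apply in_or_app. right. apply in_or_app. right.
  apply in_map_iff. exists l. split; auto. apply in_seq; lia.
Qed.

Lemma Sp1 m n p i j : (1 <= m)%nat -> (p <= n / 2)%nat -> (i + j = 2 * p + 1)%nat ->
  InSp (basis m n) (fun u => u ^ i * (u ^ m) ^ j).
Proof.
  intros Hm Hp Hij. destruct j as [|kk].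
  - eapply InSp_ext. apply InSp_in. apply (in_basis1 m n p Hp).
    intros u _. cbv beta. rewrite pow_O. replace i with (2 * p + 1)%nat by lia. ring.
  - eapply InSp_ext. apply InSp_in. apply (in_basis2 m n p kk Hp). lia.
    intros u _. rewrite <- pow_mult, <- pow_add. f_equal.
    destruct m as [|m']; [lia|]. replace (S m' - 1)%nat with m' by lia. nia.
Qed.

Lemma Sp2 m n q : (1 <= q)%nat -> (q <= (n + 1) / 2)%nat -> InSp (basis m n) (fun u => hh m u ^ q).
Proof.
  intros H1 H2. eapply InSp_ext. apply InSp_in. apply (in_basis3 m n (q - 1)). lia.
  intros u _. unfold hh. f_equal. lia.
Qed.

Lemma H_span m n D F : (1 <= m)%nat -> H D F -> forall p, D = (2 * p + 1)%nat -> (p <= n / 2)%nat ->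
  InSp (basis m n) (fun u => sqrt (hh m u) ^ D * F (u / sqrt (hh m u)) (u ^ m / sqrt (hh m u))).
Proof.
  intros Hm. induction 1; intros p HD Hp.
  - eapply InSp_ext. apply (Sp1 m n p i j); auto.
    intros u Hu. pose proof (sqrt_lt_R0 _ (hh_pos m u Hu)). set (s := sqrt (hh m u)) in *.
    unfold Rdiv. rewrite !Rpow_mult_distr, !pow_inv, pow_add.
    field. split; apply pow_nonzero; lra.
  - eapply InSp_ext. apply InSp_plus. apply (IHH1 p); eauto. apply (IHH2 p); eauto.
    intros u _. simpl. ring.
  - eapply InSp_ext. apply (InSp_scal _ k). apply (IHH p); eauto.
    intros u _. simpl. ring.
  - eapply InSp_ext. apply (IHH p); eauto. intros u _. cbv beta. match goal with Hx : forall s c : R, _ = _ |- _ => rewrite Hx end. auto.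
Qed.

Lemma sqrt_pow_even h p : 0 <= h -> sqrt h ^ (2 * p) = h ^ p.
Proof. intros. rewrite pow_mult, pow2_sqrt; auto. Qed.

Lemma JSpan m n a b : (1 <= m)%nat -> (1 <= a + b <= n + 1)%nat ->
  InSp (basis m n) (fun u => sqrt (hh m u) ^ (a + b) * Jp a b (theta0 m (hh m u))) /\
  InSp (basis m n) (fun u => sqrt (hh m u) ^ (a + b) * Jm a b (theta0 m (hh m u))).
Proof.
  intros Hm Hab. destruct (Jfinal a b) as [Pe Po].
  destruct (Nat.Even_or_Odd (a + b)) as [[p Hp]|[p Hp]].
  - destruct (Pe p Hp) as [kap Hk].
    assert (Hsp : InSp (basis m n) (fun u => kap * hh m u ^ p)).
    { apply InSp_scal. apply Sp2. lia. apply Nat.div_le_lower_bound; lia. }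
    split; (eapply InSp_ext; [apply Hsp|]); intros u Hu; rewrite (proj1 (Hk _)) || rewrite (proj2 (Hk _));
      rewrite Hp, sqrt_pow_even by (apply Rlt_le, hh_pos; auto); ring.
  - destruct (Po p Hp) as [F [HF Hk]].
    assert (Hsp : InSp (basis m n) (fun u => 2 * (sqrt (hh m u) ^ (a + b) * F (u / sqrt (hh m u)) (u ^ m / sqrt (hh m u))))).
    { apply InSp_scal. apply (H_span m n (a+b) F Hm HF p Hp). apply Nat.div_le_lower_bound; lia. }
    split.
    + eapply InSp_ext. apply Hsp. intros u Hu. rewrite (proj1 (Hk _)).
      destruct (theta_vals m u Hu) as [E1 E2]. rewrite E1, E2. ring.
    + eapply InSp_ext. apply (InSp_scal _ (-1)). apply Hsp. intros u Hu. rewrite (proj2 (Hk _)).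
      destruct (theta_vals m u Hu) as [E1 E2]. rewrite E1, E2. ring.
Qed.

Lemma existence m n ap bp am bm : (1 <= m)%nat ->
  InSp (basis m n) (fun u => melnikov m n ap bp am bm (hh m u)).
Proof.
  intros Hm. apply (InSp_ext _ (fun u => sum_f_R0 (fun i => sum_f_R0 (fun j => Tm ap bp am bm (hh m u) (theta0 m (hh m u)) i j) (n - i)) n)).
  2:{ intros; rewrite mel_expand; auto. }
  apply InSp_sum. intros i Hi. apply InSp_sum. intros j Hj. unfold Tm.
  destruct (JSpan m n i (j+1) Hm) as [A1 A2]. lia.
  destruct (JSpan m n (i+1) j Hm) as [B1 B2]. lia.
  replace (i + (j + 1))%nat with (i + j + 1)%nat in A1, A2 by lia.
  replace (i + 1 + j)%nat with (i + j + 1)%nat in B1, B2 by lia.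
  eapply InSp_ext. apply InSp_plus; apply InSp_plus.
  apply (InSp_scal _ (bp i j)), A1. apply (InSp_scal _ (ap i j)), B1.
  apply (InSp_scal _ (bm i j)), A2. apply (InSp_scal _ (am i j)), B2.
  intros u _. simpl. ring.
Qed.

Definition Ach m n (g : R -> R) := exists ap bp am bm : nat -> nat -> R,
  forall u, 0 < u -> melnikov m n ap bp am bm (hh m u) = g u.

Lemma sum_scal (f : nat -> R) N c : c * sum_f_R0 f N = sum_f_R0 (fun i => c * f i) N.
Proof. induction N; simpl; auto. rewrite <- IHN. ring. Qed.

Lemma Ach_ext m n g1 g2 : Ach m n g1 -> (forall u, 0 < u -> g1 u = g2 u) -> Ach m n g2.
Proof. intros [ap [bp [am [bm E]]]] He. exists ap, bp, am, bm. intros; rewrite E, He; auto. Qed.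

Lemma Ach_plus m n g1 g2 : Ach m n g1 -> Ach m n g2 -> Ach m n (fun u => g1 u + g2 u).
Proof.
  intros [ap [bp [am [bm E]]]] [ap' [bp' [am' [bm' E']]]].
  exists (fun i j => ap i j + ap' i j), (fun i j => bp i j + bp' i j),
         (fun i j => am i j + am' i j), (fun i j => bm i j + bm' i j).
  intros u Hu. rewrite <- E, <- E' by auto. rewrite !mel_expand. rewrite <- sum_plus.
  apply sum_eq. intros i _. rewrite <- sum_plus. apply sum_eq. intros j _. unfold Tm. ring.
Qed.

Lemma Ach_scal m n c g : Ach m n g -> Ach m n (fun u => c * g u).
Proof.
  intros [ap [bp [am [bm E]]]].
  exists (fun i j => c * ap i j), (fun i j => c * bp i j), (fun i j => c * am i j), (fun i j => c * bm i j).
  intros u Hu. cbv beta. rewrite <- E by auto. rewrite !mel_expand. rewrite sum_scal.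
  apply sum_eq. intros i _. rewrite sum_scal. apply sum_eq. intros j _. unfold Tm. ring.
Qed.

Lemma Ach_zero m n : Ach m n (fun _ => 0).
Proof.
  exists (fun _ _ => 0), (fun _ _ => 0), (fun _ _ => 0), (fun _ _ => 0). intros u _.
  rewrite mel_expand. apply sum_zero. intros i _. apply sum_zero. intros j _. unfold Tm. ring.
Qed.

Definition delta (i0 j0 : nat) : nat -> nat -> R := fun i j => if andb (Nat.eqb i i0) (Nat.eqb j j0) then 1 else 0.

Lemma collapse n i0 j0 (X : nat -> nat -> R) : (i0 + j0 <= n)%nat ->
  sum_f_R0 (fun i => sum_f_R0 (fun j => delta i0 j0 i j * X i j) (n - i)) n = X i0 j0.
Proof.
  intros Hij. rewrite (sum_single _ n i0).
  rewrite (sum_single _ (n - i0) j0).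
  unfold delta. rewrite !Nat.eqb_refl. simpl. ring.
  lia.
  intros j Hj; unfold delta. rewrite Nat.eqb_refl. destruct (Nat.eqb_spec j j0); [lia|]. simpl; ring.
  lia.
  intros i Hi; apply sum_zero; intros j _.
  unfold delta; destruct (Nat.eqb_spec i i0); [lia|]; simpl; ring.
Qed.

Lemma Ach_bp m n i0 j0 : (i0 + j0 <= n)%nat ->
  Ach m n (fun u => sqrt (hh m u) ^ (i0 + j0 + 1) * Jp i0 (j0 + 1) (theta0 m (hh m u))).
Proof.
  intros Hij. exists (fun _ _ => 0), (delta i0 j0), (fun _ _ => 0), (fun _ _ => 0). intros u _.
  rewrite mel_expand.
  rewrite <- (collapse n i0 j0 (fun i j => sqrt (hh m u) ^ (i + j + 1) * Jp i (j + 1) (theta0 m (hh m u)))) by auto.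
  apply sum_eq; intros i _; apply sum_eq; intros j _. unfold Tm. ring.
Qed.

Lemma Ach_ap m n i0 j0 : (i0 + j0 <= n)%nat ->
  Ach m n (fun u => sqrt (hh m u) ^ (i0 + j0 + 1) * Jp (i0 + 1) j0 (theta0 m (hh m u))).
Proof.
  intros Hij. exists (delta i0 j0), (fun _ _ => 0), (fun _ _ => 0), (fun _ _ => 0). intros u _.
  rewrite mel_expand.
  rewrite <- (collapse n i0 j0 (fun i j => sqrt (hh m u) ^ (i + j + 1) * Jp (i + 1) j (theta0 m (hh m u)))) by auto.
  apply sum_eq; intros i _; apply sum_eq; intros j _. unfold Tm. ring.
Qed.

Lemma Ach_cJ m n c a b D : (c = 0 \/ (a + b = D /\ 1 <= D <= n + 1)%nat) ->
  Ach m n (fun u => c * (sqrt (hh m u) ^ D * Jp a b (theta0 m (hh m u)))).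
Proof.
  intros [->|[HD HD2]].
  - eapply Ach_ext. apply Ach_zero. intros; simpl; ring.
  - apply Ach_scal. destruct b as [|b].
    + destruct a as [|a]; [lia|]. eapply Ach_ext. apply (Ach_ap m n a 0). lia.
      intros u _. replace (a + 0 + 1)%nat with D by lia. replace (a + 1)%nat with (S a) by lia. auto.
    + eapply Ach_ext. apply (Ach_bp m n a b). lia.
      intros u _. replace (a + b + 1)%nat with D by lia. replace (b + 1)%nat with (S b) by lia. auto.
Qed.

Lemma AchS1 m n p i j : (p <= n / 2)%nat -> (i + j = 2 * p + 1)%nat ->
  Ach m n (fun u => u ^ i * (u ^ m) ^ j).
Proof.
  intros Hp Hij. assert (H2p : (2 * p <= n)%nat).
  { pose proof (Nat.mul_div_le n 2). lia. }
  eapply Ach_ext.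
  apply (Ach_scal m n (/ 2)). apply Ach_plus.
  apply (Ach_cJ m n (INR i) (i - 1) (j + 1) (2 * p + 1)).
  { destruct i; [left; auto | right; lia]. }
  apply (Ach_cJ m n (- INR j) (i + 1) (j - 1) (2 * p + 1)).
  { destruct j; [left; simpl; ring | right; lia]. }
  intros u Hu. cbv beta.
  transitivity (/ 2 * sqrt (hh m u) ^ (2 * p + 1) * (INR i * Jp (i - 1) (j + 1) (theta0 m (hh m u)) - INR j * Jp (i + 1) (j - 1) (theta0 m (hh m u)))).
  ring. unfold Jp. rewrite L2. rewrite shiftmono. rewrite Hij, m1odd.
  destruct (theta_vals m u Hu) as [E1 E2]. rewrite E1, E2.
  pose proof (sqrt_lt_R0 _ (hh_pos m u Hu)). set (s := sqrt (hh m u)) in *.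
  rewrite <- Hij. unfold Rdiv. rewrite !Rpow_mult_distr, !pow_inv, pow_add.
  field. split; apply pow_nonzero; lra.
Qed.

Lemma AchS2 m n q : (1 <= q)%nat -> (q <= (n + 1) / 2)%nat -> Ach m n (fun u => hh m u ^ q).
Proof.
  intros H1 H2. assert (H2q : (2 * q <= n + 1)%nat).
  { pose proof (Nat.mul_div_le (n + 1) 2). nia. }
  destruct (proj1 (Jfinal 0 (2 * q)) q eq_refl) as [kap Hk].
  assert (Hkp : 0 < kap). { rewrite <- (proj1 (Hk 0)). apply J0pos. }
  eapply Ach_ext. apply (Ach_cJ m n (/ kap) 0 (2 * q) (2 * q)). right; lia.
  intros u Hu. cbv beta. rewrite (proj1 (Hk _)). rewrite sqrt_pow_even by (apply Rlt_le, hh_pos; auto). field. lra.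
Qed.

Lemma Ach_lincomb m n fs : (forall f, In f fs -> Ach m n f) -> forall cs, Ach m n (lincomb fs cs).
Proof.
  induction fs as [|f fs IH]; intros Hf cs.
  - eapply Ach_ext. apply Ach_zero. intros; destruct cs; simpl; auto.
  - destruct cs as [|c cs].
    + eapply Ach_ext. apply Ach_zero. intros; simpl; auto.
    + eapply Ach_ext. apply Ach_plus. apply (Ach_scal m n c). apply Hf; simpl; auto.
      apply IH. intros; apply Hf; simpl; auto. intros; simpl; auto.
Qed.

Lemma Ach_basis m n : (1 <= m)%nat -> forall f, In f (basis m n) -> Ach m n f.
Proof.
  intros Hm f Hin. unfold basis in Hin. apply in_app_or in Hin. destruct Hin as [Hin|Hin].
  - apply in_map_iff in Hin. destruct Hin as [p [<- Hp]]. apply in_seq in Hp.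
    eapply Ach_ext. apply (AchS1 m n p (2 * p + 1) 0). lia. lia. intros u _. simpl. ring.
  - apply in_app_or in Hin. destruct Hin as [Hin|Hin].
    + apply in_flat_map in Hin. destruct Hin as [p [Hp Hin]]. apply in_map_iff in Hin.
      destruct Hin as [kk [<- Hk]]. apply in_seq in Hp. apply in_seq in Hk.
      eapply Ach_ext. apply (AchS1 m n p (2 * p - kk) (kk + 1)). lia. lia.
      intros u _. cbv beta. rewrite <- pow_mult, <- pow_add. f_equal.
      destruct m as [|m']; [lia|]. replace (S m' - 1)%nat with m' by lia. nia.
    + apply in_map_iff in Hin. destruct Hin as [l [<- Hl]]. apply in_seq in Hl.
      eapply Ach_ext. apply (AchS2 m n (l + 1)). lia. lia. intros u _. unfold hh. auto.
Qed.

Theorem lemma3p5 (m k n : nat) (Hm : m = (2 * k + 1)%nat) (Hn : (n < m - 1)%nat) :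
  Z.of_nat (length (basis m n)) =
    ((Z.of_nat n - 1) / 2 + (Z.of_nat n / 2) ^ 2 + 3 * (Z.of_nat n / 2) + 3)%Z
  /\ lin_indep_pos (basis m n)
  /\ (forall ap bp am bm : nat -> nat -> R,
        exists cs : list R, length cs = length (basis m n) /\
          forall u, 0 < u -> melnikov m n ap bp am bm (u ^ 2 + u ^ (2 * m)) = lincomb (basis m n) cs u)
  /\ (forall cs : list R, length cs = length (basis m n) ->
        exists ap bp am bm : nat -> nat -> R,
          forall u, 0 < u -> melnikov m n ap bp am bm (u ^ 2 + u ^ (2 * m)) = lincomb (basis m n) cs u).
Proof.
  assert (Hm1 : (1 <= m)%nat) by lia.
  split. apply part1.
  split. apply (indep m k n Hm Hn).
  split.
  - intros ap bp am bm. destruct (existence m n ap bp am bm Hm1) as [cs [Hl He]].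
    exists cs. split; [auto|]. intros u Hu. apply He; auto.
  - intros cs _. destruct (Ach_lincomb m n (basis m n) (Ach_basis m n Hm1) cs) as [ap [bp [am [bm E]]]].
    exists ap, bp, am, bm. intros u Hu. apply E; auto.
Qed.
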